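(* With $\Psi$, $X,Y$, $A,B,C,D$ and $\alpha,\beta,\gamma,\delta$ as follows, for every real $t$ with $|t|<\|\Psi\|^{-1}$ (where $\|\Psi\|=\sup_{|Z|=1}|\Psi Z|$ is the operator norm) one has $$\kappa(t)=\alpha+\beta t+\gamma t^2+\delta t^3-\tfrac34\sum_{n=4}^\infty t^n\langle\Psi^{n-4}D,D\rangle,$$ and this is the Taylor series of $\kappa$ at $0$. Here $A=[\Psi X,Y]+[X,\Psi Y]$, $B=[\Psi X,\Psi Y]$, $C=[\Psi X,Y]+[\Psi Y,X]$, $D=\Psi^2[X,Y]-\Psi A+B$, $\alpha=\tfrac14|[X,Y]|^2$, $\beta=-\tfrac34\langle\Psi[X,Y],[X,Y]\rangle$, $\gamma=-\tfrac34|\Psi[X,Y]|^2+\tfrac32\langle\Psi[X,Y],A\rangle-\tfrac12\langle[X,Y],B\rangle-\tfrac14|A|^2+\tfrac14|C|^2-\langle[\Psi X,X],[\Psi Y,Y]\rangle$, $\delta=-\tfrac34\langle\Psi^3[X,Y],[X,Y]\rangle+\tfrac32\langle\Psi^2[X,Y],A\rangle-\tfrac32\langle\Psi[X,Y],B\rangle-\tfrac34\langle\Psi A,A\rangle-\tfrac14\langle\Psi C,C\rangle+\langle\Psi[\Psi X,X],[\Psi Y,Y]\rangle+\langle A,B\rangle$.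
   Context: $G$ is a compact Lie group with Lie algebra $\mathfrak g$ and bi-invariant metric $h_0$; $\langle Z_1,Z_2\rangle=h_0(Z_1,Z_2)$, $|Z|^2=\langle Z,Z\rangle$. A left-invariant metric $h$ corresponds to the $h_0$-self-adjoint positive definite $\Phi$ with $h(X,Y)=\langle\Phi X,Y\rangle$ on $\mathfrak g$. An inverse-linear path is $\Phi_t=(I-t\Psi)^{-1}$ with $\Psi$ $h_0$-self-adjoint; $h_t$ is the left-invariant metric with matrix $\Phi_t$. The unnormalized sectional curvature is $k_h(Z_1,Z_2)=h(R_h(Z_1,Z_2)Z_2,Z_1)$, and for fixed $X,Y\in\mathfrak g$, $\kappa(t)=k_{h_t}(\Phi_t^{-1}X,\Phi_t^{-1}Y)$. *)

(* Defs.v *)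
From HB Require Import structures.
From mathcomp Require Import all_boot all_order all_algebra.
From mathcomp Require Import all_classical all_reals all_analysis.
Set Implicit Arguments. Unset Strict Implicit. Unset Printing Implicit Defensive.
Import Order.TTheory GRing.Theory Num.Theory.
Import numFieldNormedType.Exports.
Local Open Scope ring_scope.
Local Open Scope classical_set_scope.

Section LieDefs.
Variables (R : realType) (n : nat).
Notation vec := 'cV[R]_n.

(* bi-invariant inner product h0 on g = R^n (orthonormal coordinates) *)
Definition ip (u v : vec) : R := (u^T *m v) 0 0.

(* a Lie bracket on g, ad-invariant for h0 (= Lie algebra of a compact group
   with bi-invariant metric h0) *)
Definition is_compact_lie_bracket (br : vec -> vec -> vec) : Prop :=
  [/\ (forall (a : R) u v w, br (a *: u + v) w = a *: br u w + br v w),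
      (forall u v, br u v = - br v u),
      (forall u v w, br u (br v w) + br v (br w u) + br w (br u v) = 0)
    & (forall u v w, ip (br u v) w = ip u (br v w))].

(* left-invariant metric h(X,Y) = <Phi X, Y> *)
Definition hmet (Phi : 'M[R]_n) (u v : vec) : R := ip (Phi *m u) v.

(* Koszul formula for left-invariant fields:
   2 h(nabla_X Y, Z) = h([X,Y],Z) - h([Y,Z],X) + h([Z,X],Y) *)
Definition koszul br Phi (X Y Z : vec) : R :=
  (hmet Phi (br X Y) Z - hmet Phi (br Y Z) X + hmet Phi (br Z X) Y) / 2.

(* Levi-Civita connection on left-invariant fields: the unique vector V with
   h(V,Z) = koszul X Y Z for all Z (Riesz representation via the basis). *)
Definition nabla br Phi (X Y : vec) : vec :=
  invmx Phi *m \col_i koszul br Phi X Y (delta_mx i 0).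

Definition curv br Phi (X Y Z : vec) : vec :=
  nabla br Phi X (nabla br Phi Y Z) - nabla br Phi Y (nabla br Phi X Z)
  - nabla br Phi (br X Y) Z.

Definition ksec br Phi (Z1 Z2 : vec) : R := hmet Phi (curv br Phi Z1 Z2 Z2) Z1.

Definition Phit (Psi : 'M[R]_n) (t : R) : 'M[R]_n := invmx (1%:M - t *: Psi).

Definition kappa br (Psi : 'M[R]_n) (X Y : vec) (t : R) : R :=
  ksec br (Phit Psi t) (invmx (Phit Psi t) *m X) (invmx (Phit Psi t) *m Y).

Definition opnorm (Psi : 'M[R]_n) : R :=
  sup [set Num.sqrt (ip (Psi *m Z) (Psi *m Z)) | Z in [set Z : vec | ip Z Z = 1]].

Section Coefs.
Variables (br : vec -> vec -> vec) (Psi : 'M[R]_n) (X Y : vec).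
Definition sqn (u : vec) := ip u u.
Definition XY := br X Y.
Definition cA := br (Psi *m X) Y + br X (Psi *m Y).
Definition cB := br (Psi *m X) (Psi *m Y).
Definition cC := br (Psi *m X) Y + br (Psi *m Y) X.
Definition cD := Psi ^+ 2 *m XY - Psi *m cA + cB.
Definition calpha := sqn XY / 4.
Definition cbeta := - (3 / 4) * ip (Psi *m XY) XY.
Definition cgamma :=
  - (3 / 4) * sqn (Psi *m XY) + (3 / 2) * ip (Psi *m XY) cA
  - (1 / 2) * ip XY cB - (1 / 4) * sqn cA + (1 / 4) * sqn cC
  - ip (br (Psi *m X) X) (br (Psi *m Y) Y).
Definition cdelta :=
  - (3 / 4) * ip (Psi ^+ 3 *m XY) XY + (3 / 2) * ip (Psi ^+ 2 *m XY) cA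
  - (3 / 2) * ip (Psi *m XY) cB - (3 / 4) * ip (Psi *m cA) cA
  - (1 / 4) * ip (Psi *m cC) cC
  + ip (Psi *m br (Psi *m X) X) (br (Psi *m Y) Y) + ip cA cB.
Definition coef (k : nat) : R :=
  match k with
  | 0 => calpha | 1 => cbeta | 2 => cgamma | 3 => cdelta
  | (m.+4)%N => - (3 / 4) * ip (Psi ^+ m *m cD) cD
  end.
End Coefs.
End LieDefs.

(* Main.v *)
Require Import Defs.
Set Warnings "-all".
From HB Require Import structures.
From mathcomp Require Import all_boot all_order all_algebra.
From mathcomp Require Import all_classical all_reals all_analysis.
From mathcomp Require Import ring lra.
Set Implicit Arguments. Unset Strict Implicit. Unset Printing Implicit Defensive.
Import Order.TTheory GRing.Theory Num.Theory.
Import numFieldNormedType.Exports.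
Local Open Scope ring_scope.
Local Open Scope classical_set_scope.

Section IP.
Variables (R : realType) (n : nat).
Implicit Types (u v w : 'cV[R]_n) (M : 'M[R]_n) (a : R).

Lemma ipE u v : ip u v = \sum_i u i 0 * v i 0.
Proof. by rewrite /ip mxE; apply: eq_bigr => i _; rewrite mxE. Qed.

Lemma ipC u v : ip u v = ip v u.
Proof. by rewrite !ipE; apply: eq_bigr => i _; rewrite mulrC. Qed.

Lemma ipDl u v w : ip (u + v) w = ip u w + ip v w.
Proof. by rewrite !ipE -big_split; apply: eq_bigr => i _; rewrite mxE mulrDl. Qed.
Lemma ipDr u v w : ip w (u + v) = ip w u + ip w v.
Proof. by rewrite ipC ipDl !(ipC w). Qed.
Lemma ipZl a u v : ip (a *: u) v = a * ip u v.
Proof. by rewrite !ipE mulr_sumr; apply: eq_bigr => i _; rewrite mxE mulrA. Qed.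
Lemma ipZr a u v : ip v (a *: u) = a * ip v u.
Proof. by rewrite ipC ipZl ipC. Qed.
Lemma ipNl u v : ip (- u) v = - ip u v.
Proof. by rewrite -scaleN1r ipZl mulN1r. Qed.
Lemma ipNr u v : ip v (- u) = - ip v u.
Proof. by rewrite ipC ipNl ipC. Qed.
Lemma ipBl u v w : ip (u - v) w = ip u w - ip v w.
Proof. by rewrite ipDl ipNl. Qed.
Lemma ipBr u v w : ip w (u - v) = ip w u - ip w v.
Proof. by rewrite ipDr ipNr. Qed.
Lemma ip0l u : ip 0 u = 0.
Proof. by rewrite -(scale0r 0) ipZl mul0r. Qed.
Lemma ip0r u : ip u 0 = 0.
Proof. by rewrite ipC ip0l. Qed.
Lemma ipMl M u v : ip (M *m u) v = ip u (M^T *m v).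
Proof. by rewrite /ip trmx_mul mulmxA. Qed.
Lemma ipMs M u v : M^T = M -> ip (M *m u) v = ip u (M *m v).
Proof. by move=> HM; rewrite ipMl HM. Qed.
Lemma ip_delta u i : ip u (delta_mx i 0) = u i 0.
Proof. by rewrite /ip -colE !mxE. Qed.
End IP.

Section Bracket.
Variables (R : realType) (n : nat) (br : 'cV[R]_n -> 'cV[R]_n -> 'cV[R]_n).
Hypothesis Hbr : is_compact_lie_bracket br.
Implicit Types (u v w : 'cV[R]_n) (a : R).

Lemma br_lin a u v w : br (a *: u + v) w = a *: br u w + br v w.
Proof. by case: Hbr. Qed.
Lemma br_anti u v : br u v = - br v u.
Proof. by case: Hbr. Qed.
Lemma br_adinv u v w : ip (br u v) w = ip u (br v w).
Proof. by case: Hbr. Qed.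
Lemma brDl u v w : br (u + v) w = br u w + br v w.
Proof. by have := br_lin 1 u v w; rewrite !scale1r. Qed.
Lemma br0l w : br 0 w = 0.
Proof. have h := brDl 0 0 w; rewrite addr0 in h.
by apply: (@addrI _ (br 0 w)); rewrite addr0 -h. Qed.
Lemma brZl a u w : br (a *: u) w = a *: br u w.
Proof. by have := br_lin a u 0 w; rewrite br0l !addr0. Qed.
Lemma brNl u w : br (- u) w = - br u w.
Proof. by rewrite -scaleN1r brZl scaleN1r. Qed.
Lemma brBl u v w : br (u - v) w = br u w - br v w.
Proof. by rewrite brDl brNl. Qed.
Lemma brDr u v w : br w (u + v) = br w u + br w v.
Proof. by rewrite br_anti brDl opprD -!br_anti. Qed.
Lemma brZr a u w : br w (a *: u) = a *: br w u.
Proof. by rewrite br_anti brZl -scalerN -br_anti. Qed.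
Lemma brNr u w : br w (- u) = - br w u.
Proof. by rewrite br_anti brNl opprK -br_anti. Qed.
Lemma brBr u v w : br w (u - v) = br w u - br w v.
Proof. by rewrite brDr brNr. Qed.
Lemma br0r w : br w 0 = 0.
Proof. by rewrite br_anti br0l oppr0. Qed.
Lemma brxx u : br u u = 0.
Proof.
have h : (2 : R) *: br u u = 0.
  by rewrite scaler_nat mulr2n {1}br_anti addNr.
by move/eqP: h; rewrite scaler_eq0 pnatr_eq0 /= => /eqP.
Qed.
Lemma ip_br_self u v : ip (br u v) u = 0.
Proof. by rewrite br_anti ipNl br_adinv brxx ip0r oppr0. Qed.
End Bracket.

Section Nabla.
Variables (R : realType) (n : nat) (br : 'cV[R]_n -> 'cV[R]_n -> 'cV[R]_n).
Hypothesis Hbr : is_compact_lie_bracket br.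
Variable Phi : 'M[R]_n.
Hypotheses (HPs : Phi^T = Phi) (HPu : Phi \in unitmx).
Implicit Types (a b c x y : 'cV[R]_n).

Definition Nv a b := (1/2 : R) *: (Phi *m br a b + br a (Phi *m b) + br b (Phi *m a)).

Lemma koszulE a b c : koszul br Phi a b c = ip (Nv a b) c.
Proof.
rewrite /koszul /hmet /Nv ipZl !ipDl.
have e1 : ip (Phi *m br b c) a = - ip (br b (Phi *m a)) c.
  by rewrite ipMs // !br_adinv // (br_anti Hbr (Phi *m a) c) ipNr opprK.
have e2 : ip (Phi *m br c a) b = ip (br a (Phi *m b)) c.
  by rewrite ipMs // br_adinv // ipC.
rewrite e1 e2; ring.
Qed.

Lemma nablaE a b : nabla br Phi a b = invmx Phi *m Nv a b.
Proof.
rewrite /nabla; congr (_ *m _); apply/matrixP => i j.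
by rewrite [LHS]mxE koszulE ip_delta (ord1 j).
Qed.

Lemma hmet_nabla a b c : hmet Phi (nabla br Phi a b) c = ip (Nv a b) c.
Proof. by rewrite /hmet nablaE mulmxA mulmxV // mul1mx. Qed.

Lemma hmetB u v c : hmet Phi (u - v) c = hmet Phi u c - hmet Phi v c.
Proof. by rewrite /hmet mulmxBr ipBl. Qed.

Lemma Nv_anti a b c : ip (Nv b c) a = - ip (Nv b a) c.
Proof.
rewrite /Nv !ipZl !ipDl.
have e1 : ip (Phi *m br b c) a = - ip (br b (Phi *m a)) c.
  by rewrite ipMs // !br_adinv // (br_anti Hbr (Phi *m a) c) ipNr opprK.
have e2 : ip (Phi *m br b a) c = - ip (br b (Phi *m c)) a.
  by rewrite ipMs // !br_adinv // (br_anti Hbr (Phi *m c) a) ipNr opprK.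
have e3 : ip (br c (Phi *m b)) a = - ip (br a (Phi *m b)) c.
  by rewrite br_adinv // [in RHS]ipC [in RHS](br_anti Hbr a) ipNr opprK.
rewrite e1 e2 e3; ring.
Qed.

Lemma Nv_xx y : Nv y y = br y (Phi *m y).
Proof.
rewrite /Nv brxx // mulmx0 add0r scalerDr -scalerDl.
by rewrite (_ : 1/2 + 1/2 = 1) ?scale1r //; field.
Qed.

Lemma Nv_self a b : ip (Nv a b) a = ip b (br (Phi *m a) a).
Proof.
rewrite /Nv ipZl !ipDl ip_br_self // addr0.
have e1 : ip (Phi *m br a b) a = ip b (br (Phi *m a) a).
  by rewrite ipMs // (br_anti Hbr a b) ipNl br_adinv // (br_anti Hbr a (Phi *m a)) ipNr opprK.
by rewrite e1 br_adinv //; field.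
Qed.

Lemma ksec_gen x y : ksec br Phi x y =
  ip (invmx Phi *m br y (Phi *m y)) (br (Phi *m x) x)
  + ip (Nv y x) (invmx Phi *m Nv x y) - ip (Nv (br x y) y) x.
Proof.
rewrite /ksec /curv !hmetB !hmet_nabla Nv_self nablaE Nv_xx.
by rewrite Nv_anti nablaE ipC opprK.
Qed.
End Nabla.

Lemma T2_alg (R : realType) (n : nat) (Psi P Qm : 'M[R]_n) (w S C : 'cV[R]_n) (t : R) :
  Psi^T = Psi -> P^T = P ->
  (forall u : 'cV_n, P *m (Qm *m u) = u) -> (forall u : 'cV_n, Qm *m (P *m u) = u) ->
  (forall u : 'cV_n, Qm *m u = u - t *: (Psi *m u)) -> S = - (t *: C) ->
  ip ((1/2 : R) *: (S - P *m w)) (Qm *m ((1/2 : R) *: (P *m w + S))) =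
  (1/4) * (- ip (P *m w) w + t ^+ 2 * (ip C C - t * ip (Psi *m C) C)).
Proof.
move=> HPsi HP PQ QP Qv SE.
rewrite -scalemxAr ipZl ipZr mulmxDr QP.
rewrite !(ipDl, ipDr, ipNl, ipNr).
rewrite (ipMs w (Qm *m S) HP) PQ (ipC S w).
rewrite SE Qv !(ipNl, ipNr, ipZl, ipZr, ipBl, ipBr, scalerN, mulmxN) -scalemxAr.
rewrite !(ipNl, ipNr, ipZl, ipZr, ipBl, ipBr, scalerN, mulmxN) (ipC C (Psi *m C)).
by field.
Qed.

Lemma T3_alg (R : realType) (n : nat) (br : 'cV[R]_n -> 'cV[R]_n -> 'cV[R]_n)
  (P : 'M[R]_n) (w x y X Y : 'cV[R]_n) :
  is_compact_lie_bracket br -> P^T = P -> P *m x = X -> P *m y = Y -> br x y = w ->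
  ip ((1/2 : R) *: (P *m br w y + br w (P *m y) + br y (P *m w))) x =
  (1/2) * (ip w (br y X + br Y x) + ip (P *m w) w).
Proof.
move=> Hbr HP Hx Hy Hw.
rewrite ipZl !ipDl ipDr (ipMs _ _ HP) Hx Hy br_adinv // br_adinv //.
have e : ip (br y (P *m w)) x = ip (P *m w) w.
  by rewrite br_adinv // ipC br_adinv // Hw.
by rewrite e.
Qed.

Lemma Phiw_alg (R : realType) (n : nat) (Psi P Qm : 'M[R]_n) (w0 A B D w : 'cV[R]_n) (t : R) :
  (forall u : 'cV_n, P *m (Qm *m u) = u) -> (forall u : 'cV_n, Qm *m (P *m u) = u) ->
  (forall u : 'cV_n, Qm *m u = u - t *: (Psi *m u)) ->
  D = Psi ^+ 2 *m w0 - Psi *m A + B -> w = w0 - t *: A + t ^+ 2 *: B ->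
  P *m w = w0 + t *: (Psi *m w0 - A) + t ^+ 2 *: (P *m D).
Proof.
move=> PQ QP Qv HD Hw.
suff -> : w = Qm *m (w0 + t *: (Psi *m w0 - A) + t ^+ 2 *: (P *m D)) by rewrite PQ.
rewrite Hw mulmxDr -scalemxAr QP HD Qv expr2 -mulmxA.
rewrite !(mulmxDr, mulmxBr, mulmxN, scalerDr, scalerBr, scalerN) -!scalemxAr.
apply/matrixP => i j; rewrite !(mxE, scalerA).
ring.
Qed.

Lemma final_alg (R : realType) (n : nat) (Psi P : 'M[R]_n) (w0 A B C D p q w : 'cV[R]_n) (t : R) :
  Psi^T = Psi -> P^T = P -> D = Psi ^+ 2 *m w0 - Psi *m A + B ->
  w = w0 - t *: A + t ^+ 2 *: B ->
  P *m w = w0 + t *: (Psi *m w0 - A) + t ^+ 2 *: (P *m D) ->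
  - t ^+ 2 * (ip p q - t * ip (Psi *m p) q)
  + (1/4) * (- ip (P *m w) w + t ^+ 2 * (ip C C - t * ip (Psi *m C) C))
  - (1/2) * (ip w (- ((2 : R) *: w0) + t *: A) + ip (P *m w) w)
  = ip w0 w0 / 4 + (- (3/4) * ip (Psi *m w0) w0) * t
    + (- (3 / 4) * ip (Psi *m w0) (Psi *m w0) + (3 / 2) * ip (Psi *m w0) A
       - (1 / 2) * ip w0 B - (1 / 4) * ip A A + (1 / 4) * ip C C - ip p q) * t ^+ 2
    + (- (3 / 4) * ip (Psi ^+ 3 *m w0) w0 + (3 / 2) * ip (Psi ^+ 2 *m w0) A
       - (3 / 2) * ip (Psi *m w0) B - (3 / 4) * ip (Psi *m A) A
       - (1 / 4) * ip (Psi *m C) C + ip (Psi *m p) q + ip A B) * t ^+ 3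
    - (3/4) * t ^+ 4 * ip (P *m D) D.
Proof.
move=> HPsi HP HD Hw HPw.
have E4 : ip (P *m w) w = ip (w0 + t *: (Psi *m w0 - A)) w
   + t ^+ 2 * (ip D (w0 + t *: (Psi *m w0 - A)) + t ^+ 2 * ip (P *m D) D).
  rewrite {1}HPw ipDl ipZl (ipMs D w HP) HPw ipDr ipZr (ipC D (P *m D)).
  by [].
have P2 : Psi ^+ 2 *m w0 = Psi *m (Psi *m w0) by rewrite expr2 -mulmxA.
have P3 : Psi ^+ 3 *m w0 = Psi *m (Psi ^+ 2 *m w0) by rewrite exprS -mulmxA.
have hD1 : ip D w0 = ip (Psi *m w0) (Psi *m w0) - ip (Psi *m w0) A + ip w0 B.
  rewrite HD !(ipDl, ipBl, ipNl) P2 (ipMs (Psi *m w0) w0 HPsi) (ipMs A w0 HPsi).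
  by rewrite (ipC A) (ipC B).
have hD2 : ip D (Psi *m w0) = ip (Psi ^+ 3 *m w0) w0 - ip (Psi ^+ 2 *m w0) A
    + ip (Psi *m w0) B.
  rewrite HD !(ipDl, ipBl, ipNl) P3 -(ipMs (Psi ^+ 2 *m w0) w0 HPsi).
  by rewrite (ipMs A (Psi *m w0) HPsi) -P2 (ipC A) (ipC B).
have hD3 : ip D A = ip (Psi ^+ 2 *m w0) A - ip (Psi *m A) A + ip A B.
  by rewrite HD !(ipDl, ipBl, ipNl) (ipC B).
rewrite !E4 Hw.
rewrite !(ipDl, ipDr, ipBl, ipBr, ipZl, ipZr, ipNl, ipNr) hD1 hD2 hD3.
rewrite (ipC A w0) (ipC B w0) (ipC B A).
by field.
Qed.

Section Kappa.
Variables (R : realType) (n : nat) (br : 'cV[R]_n -> 'cV[R]_n -> 'cV[R]_n).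
Hypothesis Hbr : is_compact_lie_bracket br.
Variables (Psi : 'M[R]_n) (X Y : 'cV[R]_n) (t : R).
Hypothesis HPsi : Psi^T = Psi.
Let Q := 1%:M - t *: Psi.
Hypothesis HQ : Q \in unitmx.
Let Phi := invmx Q.

Let HQs : Q^T = Q.
Proof. by rewrite /Q linearB /= trmx1 linearZ /= HPsi. Qed.
Let HPs : Phi^T = Phi.
Proof. by rewrite /Phi trmx_inv HQs. Qed.
Let HPu : Phi \in unitmx.
Proof. by rewrite /Phi unitmx_inv. Qed.
Let PhiQ (u : 'cV[R]_n) : Phi *m (Q *m u) = u.
Proof. by rewrite mulmxA mulVmx // mul1mx. Qed.
Let QPhi (u : 'cV[R]_n) : Q *m (Phi *m u) = u.
Proof. by rewrite mulmxA mulmxV // mul1mx. Qed.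
Let Qv (u : 'cV[R]_n) : Q *m u = u - t *: (Psi *m u).
Proof. by rewrite /Q mulmxBl mul1mx -scalemxAl. Qed.

Let w0 := br X Y.
Let A := cA br Psi X Y.
Let B := cB br Psi X Y.
Let C := cC br Psi X Y.
Let D := cD br Psi X Y.
Let p := br (Psi *m X) X.
Let q := br (Psi *m Y) Y.

Lemma kappa_ksec : kappa br Psi X Y t = ksec br Phi (Q *m X) (Q *m Y).
Proof. by rewrite /kappa /Phit invmxK. Qed.

Lemma kappa_step1 : kappa br Psi X Y t =
   ip (Q *m br (Q *m Y) Y) (br X (Q *m X))
  + ip (Nv br Phi (Q *m Y) (Q *m X)) (Q *m Nv br Phi (Q *m X) (Q *m Y))
  - ip (Nv br Phi (br (Q *m X) (Q *m Y)) (Q *m Y)) (Q *m X).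
Proof. by rewrite kappa_ksec ksec_gen // /Phi invmxK !PhiQ. Qed.

Lemma T1E : ip (Q *m br (Q *m Y) Y) (br X (Q *m X)) =
  - t ^+ 2 * (ip p q - t * ip (Psi *m p) q).
Proof.
rewrite !Qv brBl // brZl // brxx // sub0r brBr // brZr // brxx // sub0r.
rewrite (br_anti Hbr X) -/p -/q.
rewrite !(ipNl, ipNr, ipZl, ipZr, ipBl, ipBr, mulmxN, scalerN, mulmxBr, mulmxDr) -!scalemxAr ?ipZl.
rewrite (ipC q p) (ipMs q p HPsi) (ipC q).
ring.
Qed.

Let x := Q *m X.
Let y := Q *m Y.
Let w := br x y.
Let S := br x Y + br y X.

Lemma SE : S = - (t *: C).
Proof.
rewrite /S /x /y !Qv !(brBl Hbr) !(brZl Hbr) /C /cC (br_anti Hbr Y X).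
by rewrite scalerDr opprD addrACA subrr add0r.
Qed.

Lemma Nv_yx : Nv br Phi y x = (1/2 : R) *: (S - Phi *m w).
Proof.
rewrite /Nv /S /w /x /y !PhiQ (br_anti Hbr (Q *m Y)) mulmxN.
by congr (_ *: _); rewrite -addrA addrC (addrC (br (Q *m Y) X)).
Qed.

Lemma Nv_xy : Nv br Phi x y = (1/2 : R) *: (Phi *m w + S).
Proof.
rewrite /Nv /S /w /x /y !PhiQ.
by congr (_ *: _); rewrite addrA.
Qed.

Lemma T2E : ip (Nv br Phi y x) (Q *m Nv br Phi x y) =
  (1/4) * (- ip (Phi *m w) w + t ^+ 2 * (ip C C - t * ip (Psi *m C) C)).
Proof. by rewrite Nv_yx Nv_xy; apply: T2_alg => //; exact: SE. Qed.

Lemma WE : w = w0 - t *: A + t ^+ 2 *: B.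
Proof.
rewrite /w /x /y !Qv (brBl Hbr) !(brBr Hbr) !(brZl Hbr) !(brZr Hbr) /A /cA /B /cB /w0.
apply/matrixP => i j; rewrite !(mxE, scalerA); ring.
Qed.

Lemma S5E : br y X + br Y x = - ((2 : R) *: w0) + t *: A.
Proof.
rewrite /x /y !Qv (brBl Hbr) (brBr Hbr) (brZl Hbr) (brZr Hbr) /A /cA /w0.
rewrite (br_anti Hbr Y X) (br_anti Hbr (Psi *m Y) X) (br_anti Hbr Y (Psi *m X)).
apply/matrixP => i j; rewrite !(mxE, scalerA); ring.
Qed.

Lemma kappa_formula : kappa br Psi X Y t =
  coef br Psi X Y 0 + coef br Psi X Y 1 * t + coef br Psi X Y 2 * t ^+ 2
  + coef br Psi X Y 3 * t ^+ 3 - (3/4) * t ^+ 4 * ip (Phi *m D) D.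
Proof.
rewrite kappa_step1 T1E T2E.
have T3 := T3_alg Hbr HPs (PhiQ X) (PhiQ Y) (erefl (br x y)).
rewrite /Nv in T3; rewrite T3 -/x -/y -/w S5E.
rewrite /coef /calpha /cbeta /cgamma /cdelta /sqn -/D.
have HD : D = Psi ^+ 2 *m w0 - Psi *m A + B by rewrite /D /cD /XY.
have HPw := Phiw_alg PhiQ QPhi Qv HD WE.
have := final_alg C p q HPsi HPs HD WE HPw.
by move=> ->.
Qed.
End Kappa.

Section Norms.
Variables (R : realType) (n : nat).
Implicit Types (u v : 'cV[R]_n).

Definition nrm v := Num.sqrt (ip v v).

Lemma ip_ge0 v : 0 <= ip v v.
Proof. by rewrite ipE; apply: sumr_ge0 => i _; rewrite -expr2 sqr_ge0. Qed.


Lemma ip_eq0 v : ip v v = 0 -> v = 0.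
Proof.
rewrite ipE => h; apply/matrixP => i j; rewrite (ord1 j) mxE.
have /eqP : v i 0 * v i 0 = 0.
  by apply: (psumr_eq0P _ h) => // k _; rewrite -expr2 sqr_ge0.
by rewrite mulf_eq0 orbb => /eqP.
Qed.

Lemma nrm_ge0 v : 0 <= nrm v.
Proof. exact: sqrtr_ge0. Qed.

Lemma nrm_eq0 v : nrm v = 0 -> v = 0.
Proof.
move=> /eqP; rewrite sqrtr_eq0 => h; apply: ip_eq0.
by apply/eqP; rewrite eq_le h ip_ge0.
Qed.

Lemma nrm0 : nrm 0 = 0.
Proof. by rewrite /nrm ip0l sqrtr0. Qed.

Lemma nrm_sqr v : nrm v ^+ 2 = ip v v.
Proof. by rewrite sqr_sqrtr // ip_ge0. Qed.

Lemma nrmZ (a : R) v : nrm (a *: v) = `|a| * nrm v.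
Proof. by rewrite /nrm ipZl ipZr mulrA -expr2 sqrtrM ?sqr_ge0 // sqrtr_sqr. Qed.

Lemma coord_le v i : `|v i 0| <= nrm v.
Proof.
rewrite -sqrtr_sqr /nrm; apply: ler_wsqrtr; rewrite ipE (bigD1 i) //= expr2.
by rewrite lerDl sumr_ge0 // => k _; rewrite -expr2 sqr_ge0.
Qed.

Lemma ip_abs u v : `|ip u v| <= nrm u * \sum_i `|v i 0|.
Proof.
rewrite ipE mulr_sumr; apply: (le_trans (ler_norm_sum _ _ _)).
by apply: ler_sum => i _; rewrite normrM ler_wpM2r // coord_le.
Qed.

Variable Psi : 'M[R]_n.

Let E := [set Num.sqrt (ip (Psi *m Z) (Psi *m Z)) | Z in [set Z : 'cV[R]_n | ip Z Z = 1]].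

Lemma opnormE : opnorm Psi = sup E.
Proof. by []. Qed.

Lemma hasubE : has_ubound E.
Proof.
exists (Num.sqrt (\sum_i (\sum_j `|Psi i j|) ^+ 2)) => _ [Z /= HZ <-].
apply: ler_wsqrtr; rewrite ipE; apply: ler_sum => i _.
have hi : `|(Psi *m Z) i 0| <= \sum_j `|Psi i j|.
  rewrite mxE; apply: (le_trans (ler_norm_sum _ _ _)); apply: ler_sum => j _.
  rewrite normrM -[leRHS]mulr1 ler_wpM2l //.
  by have := coord_le Z j; rewrite /nrm HZ sqrtr1.
rewrite expr2; apply: (le_trans (ler_norm _)); rewrite normrM.
by apply: ler_pM.
Qed.

Lemma opnorm_ge0 : 0 <= opnorm Psi.
Proof.
rewrite opnormE; have [[r Er]|nE] := pselect (exists r, E r).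
  apply: le_trans (ub_le_sup hasubE Er); case: Er => Z _ <-; exact: sqrtr_ge0.
rewrite (_ : E = set0) ?sup0 //; apply/seteqP; split => // r Er; apply: nE; by exists r.
Qed.

Lemma nrm_Psi Z : nrm (Psi *m Z) <= opnorm Psi * nrm Z.
Proof.
have [/nrm_eq0 ->|nz] := eqVneq (nrm Z) 0; first by rewrite mulmx0 nrm0 mulr0.
have cp : 0 < nrm Z by rewrite lt_def nz nrm_ge0.
pose Z' := (nrm Z)^-1 *: Z.
have HZ' : ip Z' Z' = 1.
  by rewrite /Z' ipZl ipZr mulrA -expr2 -nrm_sqr exprVn mulVf // expf_neq0.
have : E (nrm (Psi *m Z')) by exists Z'.
move/(ub_le_sup hasubE); rewrite -opnormE /Z' -scalemxAr nrmZ ger0_norm ?invr_ge0 ?nrm_ge0 //.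
by rewrite ler_pdivrMl // mulrC.
Qed.

Lemma nrm_Psi_pow k Z : nrm (Psi ^+ k *m Z) <= opnorm Psi ^+ k * nrm Z.
Proof.
elim: k => [|k IH]; first by rewrite !expr0 mul1mx mul1r.
rewrite exprS -mulmxA (le_trans (nrm_Psi _)) // exprS -mulrA.
by rewrite ler_wpM2l // opnorm_ge0.
Qed.

End Norms.

Lemma eD_alg (R : realType) (n : nat) (Psi P Qm : 'M[R]_n) (D w : 'cV[R]_n) (t : R) :
  Psi^T = Psi -> (forall u : 'cV_n, Qm *m (P *m u) = u) ->
  (forall u : 'cV_n, Qm *m u = u - t *: (Psi *m u)) ->
  ip w D = ip w (P *m D) - t * ip (Psi *m w) (P *m D).
Proof.
move=> HPsi QP Qv; rewrite -{1}(QP D) Qv ipBr ipZr (ipMs w _ HPsi) //.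
Qed.

Section Series.
Variables (R : realType) (n : nat) (br : 'cV[R]_n -> 'cV[R]_n -> 'cV[R]_n).
Hypothesis Hbr : is_compact_lie_bracket br.
Variables (Psi : 'M[R]_n) (X Y : 'cV[R]_n).
Hypothesis HPsi : Psi^T = Psi.

Lemma Q_unit (t : R) : `|t| * opnorm Psi < 1 -> (1%:M - t *: Psi) \in unitmx.
Proof.
move=> Ht; rewrite unitmxE unitfE; apply/negP => /det0P [v vnz hv].
have hQ : (1%:M - t *: Psi)^T = 1%:M - t *: Psi.
  by rewrite linearB /= trmx1 linearZ /= HPsi.
have hc : (1%:M - t *: Psi) *m v^T = 0 by rewrite -hQ -trmx_mul hv trmx0.
have e : v^T = t *: (Psi *m v^T).
  by apply/eqP; rewrite -subr_eq0 scalemxAl -{1}(mul1mx v^T) -mulmxBl hc.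
have h1 : nrm v^T <= (`|t| * opnorm Psi) * nrm v^T.
  by rewrite {1}e nrmZ -mulrA ler_wpM2l // nrm_Psi.
have h2 : (1 - `|t| * opnorm Psi) * nrm v^T <= 0 by rewrite mulrBl mul1r subr_le0.
have h3 : nrm v^T = 0.
  have hp : 0 < 1 - `|t| * opnorm Psi by rewrite subr_gt0.
  by apply/eqP; rewrite eq_le nrm_ge0 andbT -(pmulr_rle0 _ hp).
have : v = 0 by rewrite -(trmxK v) (nrm_eq0 h3) trmx0.
by move=> v0; rewrite v0 eqxx in vnz.
Qed.

Variable t : R.
Hypothesis Ht : `|t| * opnorm Psi < 1.
Let Q := 1%:M - t *: Psi.
Let Phi := invmx Q.
Let D := cD br Psi X Y.
Let Ed := Phi *m D.
Let f := fun k => coef br Psi X Y k * t ^+ k.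

Let HQ : Q \in unitmx. Proof. exact: Q_unit. Qed.
Let QPhi (u : 'cV[R]_n) : Q *m (Phi *m u) = u.
Proof. by rewrite mulmxA mulmxV // mul1mx. Qed.
Let Qv (u : 'cV[R]_n) : Q *m u = u - t *: (Psi *m u).
Proof. by rewrite /Q mulmxBl mul1mx -scalemxAl. Qed.

Lemma series_val N : series f N.+4 =
  kappa br Psi X Y t + (3/4) * t ^+ 4 * (t ^+ N * ip (Psi ^+ N *m D) Ed).
Proof.
elim: N => [|N IH].
  rewrite /series /= !big_nat_recr //= big_geq // add0r.
  rewrite (kappa_formula Hbr X Y HPsi HQ) -/Q -/Phi -/D -/Ed expr0 mul1mx (ipC D Ed).
  rewrite /f !expr0 !expr1; ring.
rewrite /series /= big_nat_recr //=; move: IH; rewrite /series /= => ->.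
rewrite /f /= (@eD_alg _ _ _ _ _ D (Psi ^+ N *m D) t HPsi QPhi Qv) -/Ed mulmxA.
have -> : Psi *m Psi ^+ N = Psi ^+ N.+1 by rewrite exprS.
rewrite !exprS; ring.
Qed.

Lemma series_cvg : series f @ \oo --> kappa br Psi X Y t.
Proof.
rewrite -(cvg_shiftn 4).
set c := (3/4 : R) * t ^+ 4.
set K := \sum_i `|Ed i 0|.
set q := `|t| * opnorm Psi.
have q0 : 0 <= q by rewrite mulr_ge0 // opnorm_ge0.
have qn : `|q| < 1 by rewrite ger0_norm.
have -> : (fun N => series f (N + 4)%N) =
    (fun N => kappa br Psi X Y t + c * (t ^+ N * ip (Psi ^+ N *m D) Ed)).
  by apply/funext => N; rewrite addnC series_val.
suff h0 : (fun N => c * (t ^+ N * ip (Psi ^+ N *m D) Ed)) @ \oo --> 0.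
  have := cvgD (cvg_cst (kappa br Psi X Y t)) h0.
  rewrite addr0 => /(_ _ _); apply; exact: eventually_filter.
rewrite -(mulr0 c); apply: cvgMr.
have hb N : `|t ^+ N * ip (Psi ^+ N *m D) Ed| <= geometric (nrm D * K) q N.
  rewrite /geometric /= normrM normrX /q exprMn.
  apply: (le_trans (ler_wpM2l (exprn_ge0 _ (normr_ge0 t)) (ip_abs _ _))).
  have h1 := nrm_Psi_pow Psi N D.
  have K0 : 0 <= K by rewrite sumr_ge0.
  rewrite mulrA [nrm D * K * _]mulrC -!mulrA ler_wpM2l ?exprn_ge0 //.
  by rewrite mulrA ler_wpM2r.
apply: (@squeeze_cvgr _ _ _ _ (fun N => - geometric (nrm D * K) q N) (geometric (nrm D * K) q)).
- by apply: nearW => N; rewrite -ler_norml.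
- rewrite -oppr0; apply: cvgN; exact: cvg_geometric.
- exact: cvg_geometric.
Qed.
End Series.

Section PS.
Variable R : realType.

Lemma nq_bound (q : R) : 0 <= q -> q < 1 ->
  forall k, k.+1%:R * q ^+ k * (1 - q) <= 1 - q ^+ k.+1.
Proof.
move=> q0 q1; elim=> [|k IH]; first by rewrite expr0 expr1 !mul1r.
have a0 : 0 <= q ^+ k by rewrite exprn_ge0.
have a1 : q ^+ k <= 1 by apply: exprn_ile1 => //; apply: ltW.
move: IH; rewrite !exprS -!natr1.
set x := k%:R; set a := q ^+ k => IH.
have x0 : 0 <= x by rewrite /x ler0n.
have h1 := ler_wpM2l q0 IH.
have qa : q * a <= 1 by rewrite -[1]mul1r ler_pM // ltW.
have h2 : 0 <= (1 - q * a) * (1 - q) by rewrite mulr_ge0 // subr_ge0 // ltW.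
nra.
Qed.

Lemma series_shift_cvg (g : R ^nat) : cvgn (series g) -> cvgn (series (fun i => g i.+1)).
Proof.
move=> hg; apply/cvg_ex; exists (limn (series g) - g 0).
have -> : series (fun i => g i.+1) = (fun n => series g n.+1 - g 0).
  apply/funext => k; rewrite /series /= big_nat_recl //.
  by rewrite addrC addKr.
apply: cvgB; last exact: cvg_cst.
by rewrite (cvg_shiftS (series g)).
Qed.

Lemma diffs_cvg (f : R ^nat) (x z : R) :
  cvgn (pseries f x) -> `|z| < `|x| -> cvgn (pseries (pseries_diffs f) z).
Proof.
move=> hx zx.
pose r := (`|z| + `|x|) / 2.
have zr : `|z| < r by rewrite /r ltr_pdivlMr // mulrDr mulr1 ltrD2l.
have rx : r < `|x| by rewrite /r ltr_pdivrMr // mulrDr mulr1 ltrD2r.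
have r0 : 0 < r by apply: le_lt_trans zr.
have hr : cvgn (pseries (fun i => `|f i|) r).
  by apply: is_cvg_pseries_inside_norm hx _; rewrite ger0_norm // ltW.
pose q := `|z| / r.
have q0 : 0 <= q by rewrite /q divr_ge0 // ltW.
have q1 : q < 1 by rewrite /q ltr_pdivrMr // mul1r.
have qr : 0 < 1 - q by rewrite subr_gt0.
apply: normed_cvg.
pose v := fun i => (r * (1 - q))^-1 * (`|f i.+1| * r ^+ i.+1).
apply: (@series_le_cvg _ _ v).
- by move=> i; rewrite normr_ge0.
- by move=> i; rewrite /v mulr_ge0 // ?invr_ge0 ?mulr_ge0 ?exprn_ge0 // ltW.
- move=> i; rewrite /v /pseries_diffs /= !normrM normrX.
  rewrite ger0_norm // (_ : `|z| = q * r); last by rewrite /q divfK // gt_eqF.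
  rewrite exprMn exprS invfM.
  have hb := nq_bound q0 q1 i.
  have hb' : i.+1%:R * q ^+ i <= (1 - q)^-1.
    rewrite -(ler_pM2r qr) mulVf ?gt_eqF //; apply: le_trans hb _.
    by rewrite gerBl exprn_ge0.
  set F := `|f i.+1|; set Ri := r ^+ i.
  have F0 : 0 <= F by rewrite normr_ge0.
  have Ri0 : 0 <= Ri by rewrite exprn_ge0 // ltW.
  have rn : r != 0 by rewrite gt_eqF.
  have qn : 1 - q != 0 by rewrite gt_eqF.
  rewrite (_ : r^-1 / (1 - q) * (F * (r * Ri)) = (1 - q)^-1 * (F * Ri)); last first.
    by field; rewrite qn rn.
  rewrite mulrC mulrA [X in X <= _](_ : _ = (i.+1%:R * q ^+ i) * (F * Ri)); last by ring.
  by rewrite ler_wpM2r // mulr_ge0.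
- apply: is_cvg_seriesZ; exact: (series_shift_cvg hr).
Qed.

End PS.

Lemma pseries0 (R : realType) (g : R ^nat) : limn (pseries g 0) = g 0.
Proof.
apply: cvg_lim => //; rewrite -cvg_shiftS.
have -> : (fun n => pseries g 0 n.+1) = (fun=> g 0).
  apply/funext => k; rewrite /pseries /series /= big_nat_recl // expr0 mulr1.
  by rewrite big1 ?addr0 // => i _; rewrite expr0n mulr0.
exact: cvg_cst.
Qed.

Lemma iter_diffs (R : realType) (c : R ^nat) k m :
  iter k (@pseries_diffs R) c m * (m`!)%:R = ((m + k)`!)%:R * c (m + k)%N.
Proof.
elim: k m => [|k IH] m; first by rewrite addn0 mulrC.
rewrite iterS /pseries_diffs mulrC mulrA -natrM mulnC -factS mulrC IH.
by rewrite addSnnS.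
Qed.

Section Main.
Variables (R : realType) (n : nat) (br : 'cV[R]_n -> 'cV[R]_n -> 'cV[R]_n).
Hypothesis Hbr : is_compact_lie_bracket br.
Variables (Psi : 'M[R]_n) (X Y : 'cV[R]_n).
Hypothesis HPsi : Psi^T = Psi.

Let c := coef br Psi X Y.
Let rho := opnorm Psi.
Let U (x : R) := `|x| * rho < 1.
Let rho0 : 0 <= rho. Proof. exact: opnorm_ge0. Qed.

Lemma bigger K : U K -> exists K', `|K| < `|K'| /\ U K'.
Proof.
rewrite /U => HK.
set e := 1 - `|K| * rho.
have e0 : 0 < e by rewrite subr_gt0.
set d := e / (2 * (rho + 1)).
have d0 : 0 < d by rewrite divr_gt0 // mulr_gt0 // ltr_wpDl.
have hd : d * (2 * (rho + 1)) = e by rewrite /d divfK // gt_eqF // mulr_gt0 // ltr_wpDl.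
have K0 : 0 <= `|K| + d by rewrite addr_ge0 // ltW.
exists (`|K| + d); rewrite (ger0_norm K0); split.
  by rewrite ltrDl.
have : d * rho < e by nra.
rewrite /e; nra.
Qed.

Lemma cvg_iter m K : U K -> cvgn (pseries (iter m (@pseries_diffs R) c) K).
Proof.
elim: m K => [|m IH] K HK.
  by apply/cvg_ex; exists (kappa br Psi X Y K); exact: (series_cvg (X:=X) (Y:=Y) Hbr HPsi HK).
have [K' [KK' HK']] := bigger HK.
exact: (diffs_cvg (IH K' HK') KK').
Qed.

Let F m x := limn (pseries (iter m (@pseries_diffs R) c) x).

Lemma F_derive m x : U x -> is_derive x 1 (F m) (F m.+1 x).
Proof.
move=> Hx; have [K' [KK' HK']] := bigger Hx.
have h := pseries_snd_diffs (cvg_iter (m:=m) HK') (cvg_iter (m:=m.+1) HK') (cvg_iter (m:=m.+2) HK') KK'.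
exact h.
Qed.

Lemma U_near x : U x -> \forall y \near x, U y.
Proof.
rewrite /U => Hx.
set e := (1 - `|x| * rho) / (rho + 1).
have e0 : 0 < e by rewrite divr_gt0 ?subr_gt0 // ltr_wpDl.
have he : e * (rho + 1) = 1 - `|x| * rho by rewrite /e divfK // gt_eqF // ltr_wpDl.
move: (nbhsx_ballx x e e0); apply: filterS => y; rewrite -ball_normE /ball_ /= => hy.
have hy' : `|y| <= `|x| + `|x - y|.
  by rewrite -{1}(subKr x y) (le_trans (ler_normD _ _)) // normrN.
have h1 : `|y| * rho <= (`|x| + `|x - y|) * rho by rewrite ler_wpM2r.
have h2 : `|x - y| * rho <= e * rho by rewrite ler_wpM2r // ltW.
nra.
Qed.

Lemma kappa_F y : U y -> kappa br Psi X Y y = F 0 y.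
Proof.
move=> Hy; rewrite /F /=; apply/esym/cvg_lim => //.
exact: (series_cvg (X:=X) (Y:=Y) Hbr HPsi Hy).
Qed.

Lemma D_eq k y : U y -> derive1n k (kappa br Psi X Y) y = F k y.
Proof.
elim: k y => [|k IH] y Hy; first exact: kappa_F.
rewrite /derive1n iterS -/(derive1n k _) derive1E.
apply: derive_val; apply: (near_eq_is_derive _ (F_derive k Hy)).
by move: (U_near Hy); apply: filterS => z Hz; rewrite IH.
Qed.

Theorem main_part2 k :
  (\forall t \near (0 : R), derivable (derive1n k (kappa br Psi X Y)) t 1)
  /\ derive1n k (kappa br Psi X Y) 0 = coef br Psi X Y k * (k`!)%:R.
Proof.
have U0 : U 0 by rewrite /U normr0 mul0r.
split.
  move: (U_near U0); apply: filterS => y Hy.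
  have h : is_derive y 1 (derive1n k (kappa br Psi X Y)) (F k.+1 y).
    apply: (near_eq_is_derive _ (F_derive k Hy)).
    by move: (U_near Hy); apply: filterS => z Hz; rewrite D_eq.
  by case: h.
rewrite D_eq // /F pseries0.
have := iter_diffs c k 0; rewrite fact0 mulr1 add0n => ->.
by rewrite mulrC.
Qed.
End Main.

Theorem mainTheorem3 (R : realType) (n : nat) (br : 'cV[R]_n -> 'cV[R]_n -> 'cV[R]_n)
  (Psi : 'M[R]_n) (X Y : 'cV[R]_n) :
  is_compact_lie_bracket br -> Psi^T = Psi ->
  (forall t : R, `|t| * opnorm Psi < 1 ->
     series (fun k : nat => coef br Psi X Y k * t ^+ k) @ \oo --> kappa br Psi X Y t)
  /\
  (forall k : nat,
     (\forall t \near (0 : R), derivable (derive1n k (kappa br Psi X Y)) t 1)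
     /\ derive1n k (kappa br Psi X Y) 0 = coef br Psi X Y k * (k`!)%:R).
Proof.
move=> Hbr HPsi; split.
- move=> t Ht; exact: (series_cvg Hbr HPsi Ht).
- move=> k; exact: (main_part2 Hbr X Y HPsi k).
Qed.
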